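(* Let $\mathbf{F}$ be a field of characteristic $3$, let $\lambda=(\lambda_1,\lambda_2)$ be a partition and let $u\in\mathbf{N}$ satisfy $3^u\le\lambda_2$. Then the $\mathbf{F}$-span of $\{b(k):0\le k<3^u\}$ is a subalgebra of $S_\mathbf{F}(\lambda)$.
   Context: $S_\mathbf{F}(\lambda)=\operatorname{End}_{\mathbf{F}S_r}(M^\lambda)$ ($M^\lambda$ the permutation module on cosets of $S_{\lambda_1}\times S_{\lambda_2}$) is a commutative $\mathbf{F}$-algebra with basis $b(0)=\mathbf{1},b(1),\dots,b(\lambda_2)$ and multiplication $b(i)b(j)=\sum_{h=\max\{i,j\}}^{i+j}\binom{h}{i}\binom{h}{j}\binom{m+i+j}{i+j-h}b(h)$, where $m=\lambda_1-\lambda_2$ and $b(a)=0$ for $a>\lambda_2$. *)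

(* Defs.v *)
From HB Require Import structures.
From mathcomp Require Import all_boot all_order all_algebra.
Set Implicit Arguments. Unset Strict Implicit. Unset Printing Implicit Defensive.
Import GRing.Theory.
Local Open Scope ring_scope.

(* The Schur algebra S_F(lambda), lambda = (l1, l2), realised on its basis
   b(0), ..., b(l2): an element is the row vector of its coordinates
   ('rV[F]_(l2.+1)), entry k being the coefficient of b(k). *)

(* Structure constant: coefficient of b(h) in b(i) b(j), with m = l1 - l2.
   It is 'C(h,i) 'C(h,j) 'C(m+i+j, i+j-h) for max i j <= h <= i+j, else 0. *)
Definition schur_coef (m i j h : nat) : nat :=
  if (maxn i j <= h <= i + j)%N
  then ('C(h, i) * 'C(h, j) * 'C(m + i + j, i + j - h))%N
  else 0%N.

(* The basis element b(k) (b(k) = 0 for k > l2). *)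
Definition schur_b (F : fieldType) (l2 k : nat) : 'rV[F]_(l2.+1) :=
  \row_(h < l2.+1) (h == k :> nat)%:R.

(* Multiplication of S_F(lambda): bilinear extension of
   b(i) b(j) = sum_h coef(i,j,h) b(h), terms with h > l2 being 0. *)
Definition schur_mul (F : fieldType) (l1 l2 : nat)
    (x y : 'rV[F]_(l2.+1)) : 'rV[F]_(l2.+1) :=
  \row_(h < l2.+1) \sum_(i < l2.+1) \sum_(j < l2.+1)
     x 0 i * y 0 j * (schur_coef (l1 - l2) i j h)%:R.

(* Matrix whose rows are b(0), ..., b(3^u - 1); its row space (in the
   sense of mxalgebra, (x <= _)%MS) is the F-span of {b(k) : k < 3^u}. *)
Definition schur_span (F : fieldType) (l2 u : nat) : 'M[F]_(3 ^ u, l2.+1) :=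
  \matrix_(k < 3 ^ u) schur_b F l2 k.

(* Main.v *)
Require Import Defs.
From HB Require Import structures.
From mathcomp Require Import all_boot all_order all_algebra.
From mathcomp Require Import zify.
Import GRing.Theory.
Local Open Scope ring_scope.

Lemma binA u k : (0 < k < 3 ^ u)%N -> (3 %| 'C(3 ^ u, k))%N.
Proof.
case: k => [//|k] /= hk.
apply/negPn/negP => hn.
have cop : coprime (3 ^ u) 'C(3 ^ u, k.+1) by apply: coprimeXl; rewrite prime_coprime.
have : (3 ^ u %| k.+1 * 'C(3 ^ u, k.+1))%N by rewrite -mul_bin_diag dvdn_mulr.
rewrite Gauss_dvdl // => /dvdn_leq => /(_ isT); lia.
Qed.

Lemma binB u a i : (a < i)%N -> (i < 3 ^ u)%N -> (3 %| 'C(3 ^ u + a, i))%N.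
Proof.
move=> hai hi; rewrite -binomial.Vandermonde; apply: dvdn_sum => j _.
case: (posnP j) => [->|jp].
  by rewrite subn0 (bin_small hai) muln0.
apply: dvdn_mulr; apply: binA; rewrite jp /=.
have := ltn_ord j; lia.
Qed.

Lemma binC m u i j h : (i < 3 ^ u)%N -> (j < 3 ^ u)%N -> (3 ^ u <= h)%N ->
  (3 %| schur_coef m i j h)%N.
Proof.
move=> hi hj hh; rewrite /schur_coef.
case: ifP => [/andP [h1 h2]|]; last by [].
have ea : h = (3 ^ u + (h - 3 ^ u))%N by lia.
case: (ltnP (h - 3 ^ u) i) => [lt1|ge1].
  rewrite -mulnA; apply: dvdn_mulr; rewrite ea; exact: binB.
case: (ltnP (h - 3 ^ u) j) => [lt2|ge2].
  apply: dvdn_mulr; apply: dvdn_mull; rewrite ea; exact: binB.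
exfalso; lia.
Qed.

Lemma memV (F : fieldType) l2 u (x : 'rV[F]_(l2.+1)) :
  (x <= schur_span F l2 u)%MS <->
  (forall k : 'I_(l2.+1), (3 ^ u <= k)%N -> x 0 k = 0).
Proof.
split.
  move/submxP => [w ->] k hk.
  rewrite !mxE; apply: big1 => r _.
  rewrite !mxE.
  have : (nat_of_ord k == r :> nat) = false by have := ltn_ord r; lia.
  by move=> ->; rewrite mulr0.
move=> H; apply/submxP.
exists (\row_(r < 3 ^ u) (if (r < l2.+1)%N =P true is ReflectT p then x 0 (Ordinal p) else 0)).
apply/rowP => k; rewrite !mxE.
case: (ltnP k (3 ^ u)) => hk.
  rewrite (bigD1 (Ordinal hk)) //= big1 ?addr0.
    rewrite !mxE eqxx mulr1.
    case: eqP => [p|]; last by move=> n; exfalso; apply: n; exact: (ltn_ord k).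
    by f_equal; apply: val_inj.
  move=> r hr; rewrite !mxE.
  have : (nat_of_ord k == r :> nat) = false.
    by apply/negbTE; apply: contra hr => /eqP e; apply/eqP/val_inj.
  by move=> ->; rewrite mulr0.
rewrite H // big1 // => r _; rewrite !mxE.
have : (nat_of_ord k == r :> nat) = false by have := ltn_ord r; lia.
by move=> ->; rewrite mulr0.
Qed.

Theorem lemma3p2 (F : fieldType) (l1 l2 u : nat)
  (hchar : (3 \in [pchar F])%N) (hpart : (l2 <= l1)%N) (hu : (3 ^ u <= l2)%N) :
  let V := schur_span F l2 u in
  (schur_b F l2 0 <= V)%MS /\
  (forall x y : 'rV[F]_(l2.+1), (x <= V)%MS -> (y <= V)%MS ->
     [/\ ((x + y)%R <= V)%MS,
         forall a : F, ((a *: x)%R <= V)%MS &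
         (schur_mul l1 x y <= V)%MS]).
Proof.
move=> V; split.
  apply/memV => k hk; rewrite mxE.
  have : (nat_of_ord k == 0%N) = false by have := expn_gt0 3 u; lia.
  by move=> ->.
move=> x y /memV hx /memV hy; split.
- by apply/memV => k hk; rewrite mxE hx // hy // addr0.
- by move=> a; apply/memV => k hk; rewrite mxE hx // mulr0.
apply/memV => k hk; rewrite mxE; apply: big1 => i _; apply: big1 => j _.
case: (ltnP i (3 ^ u)) => hi; last by rewrite hx // !mul0r.
case: (ltnP j (3 ^ u)) => hj; last by rewrite hy // mulr0 mul0r.
have := @binC (l1 - l2) u i j k hi hj hk.
by rewrite (dvdn_pcharf hchar) => /eqP ->; rewrite mulr0.
Qed.
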